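(* Let $(X_1,X_2)$ be an extensible pair and let $\gamma\in\mathcal H_2$ with $|\gamma|_{(X_1,X_2)}=0$; put $l=\mathrm{ls}(\gamma)$, $r=\mathrm{rs}(\gamma)$. Then there exist integers $b_i$ ($1\le i\le l-1$), $c_i$ ($1\le i\le r-1$) and $s$ such that for all $k\ge l+r-d_1-d_2$, $$\gamma^{(k)}=\sum_{p\in Z_k,\ i(p)\le l-1}b_{i(p)}\alpha_p+\sum_{p\in Z_k,\ i(p)\ge l,\ \bar\imath(p)\ge r}s\,\alpha_p+\sum_{p\in Z_k,\ \bar\imath(p)\le r-1}c_{\bar\imath(p)}\alpha_p.$$
   Context: Marked Dynkin diagram $(X,\xi)$: Dynkin diagram of a symmetrizable generalized Cartan matrix $C(X)$ with distinguished node $\xi$; $\det X=\det C(X)$; $X(-1)$ is $X$ minus $\xi$ ($\det\emptyset=1$); $\Delta_X=\det X-\det X(-1)$. $(X_1,X_2)$ is an extensible pair if $\det X_i\ne0$, $\Delta_i:=\Delta_{X_i}\ne0$, $\gcd(\det X_i,\Delta_i)=1$ ($i=1,2$), $\gcd(\Delta_1,\Delta_2)=1$. $Z_k$ is obtained from the disjoint union of $X_1$, a path $A_k$ (nodes $1,\dots,k$) and $X_2$ by adding simple edges $\xi_1$—$1$ and $k$—$\xi_2$; $\omega_p,\alpha_p$ are fundamental weights and simple roots of $\mathfrak g(Z_k)$. Numberings: if $X$ has $d$ nodes, a numbering is a bijection $\epsilon:N(X)\to\{1,\dots,d\}$ with $\epsilon(\xi)=d$. $X(m)$ ($m\ge0$)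 is $X$ with a path of $m$ new nodes $\xi-1-\cdots-m$ attached at $\xi$, numbered by $j(p)=\epsilon(p)$ on $X$ and $j=d+t$ on the $t$-th new node; $\bar\omega^{(m)}$ is the fundamental weight of $\mathfrak g(X(m))$ at the node with $j=d+m$. For extensible $X$ ($\det X\ne0$, $\Delta_X\ne0$, $\gcd(\det X,\Delta_X)=1$) there is (by earlier work of Kleber and the author) a unique integer sequence $(a_i)_{i\ge1}$ with $-\Delta_X\omega_p-a_{j(p)}\bar\omega^{(m)}\in Q(X(m))$ for all $m\ge0$ with $\det X(m)\ne0$ and all $p\in X(m)$. Fix numberings $\epsilon_1,\epsilon_2$ of $X_1,X_2$ ($d_i$ nodes) with sequences $(a_i^{(1)}),(a_i^{(2)})$. On $Z_k$: $i(p)=\epsilon_1(p)$ on $X_1$, $i=d_1+t$ on the $t$-th node of $A_k$, $i(p)=d_1+d_2+k+1-\epsilon_2(p)$ on $X_2$; $\bar\imath(p)=\epsilon_2(p)$ on $X_2$, $\bar\imath=d_2+k+1-t$ on the $t$-th node of $A_k$, $\bar\imath(p)=d_1+d_2+k+1-\epsilon_1(p)$ on $X_1$. $\mathcal H_1$: finitely supported integer sequences $x=(x_1,x_2,\dots)$, $\ell(x)=\max\{i:x_i\ne0\}$; $\mathcal H_2=\mathcal H_1\times\mathcal H_1$. For $\gamma=(x,y)$: $\mathrm{ls}(\gamma)=\max(\ell(x),d_1)$, $\mathrm{rs}(\gamma)=\max(\ell(y),d_2)$, $\ell(\gamma)=\mathrm{ls}+\mathrm{rs}$, and for $k\ge\ell(\gamma)-d_1-d_2$,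 $\gamma^{(k)}=\sum_{p\in Z_k}(x_{i(p)}+y_{\bar\imath(p)})\omega_p$. Number of boxes: $|\gamma|_{(X_1,X_2)}=\Delta_2\sum_ix_ia_i^{(1)}-\Delta_1\sum_iy_ia_i^{(2)}$. *)

(* Defs.v *)
(* Integer matrices are given as functions nat -> nat -> int
   (0-based indices); a marked diagram with d nodes is given in the order of a
   numbering epsilon, so node with epsilon-number j is index j-1 and the
   distinguished node xi is index d-1. *)
From mathcomp Require Import all_boot all_order all_algebra.
Set Implicit Arguments. Unset Strict Implicit. Unset Printing Implicit Defensive.
Import Order.TTheory GRing.Theory Num.Theory.
Local Open Scope ring_scope.

Definition sqmx (n : nat) (A : nat -> nat -> int) : 'M[int]_n :=
  \matrix_(i < n, j < n) A i j.

Definition is_GCM (d : nat) (C : nat -> nat -> int) : Prop :=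
  (forall i, (i < d)%N -> C i i = 2) /\
  (forall i j, (i < d)%N -> (j < d)%N -> i <> j -> C i j <= 0) /\
  (forall i j, (i < d)%N -> (j < d)%N -> (C i j = 0 <-> C j i = 0)).

Definition symmetrizable (d : nat) (C : nat -> nat -> int) : Prop :=
  exists eps : nat -> int, (forall i, (i < d)%N -> 0 < eps i) /\
    (forall i j, (i < d)%N -> (j < d)%N -> eps i * C i j = eps j * C j i).

Definition detX (d : nat) (C : nat -> nat -> int) : int := \det (sqmx d C).
(* det X(-1): X with the distinguished node (index d-1) removed; det of empty = 1 *)
Definition detXm1 (d : nat) (C : nat -> nat -> int) : int := \det (sqmx d.-1 C).
Definition DeltaX (d : nat) (C : nat -> nat -> int) : int := detX d C - detXm1 d C.

Definition extensible (d : nat) (C : nat -> nat -> int) : Prop :=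
  detX d C != 0 /\ DeltaX d C != 0 /\ gcdz (detX d C) (DeltaX d C) = 1.

(* Cartan matrix of X(m): path xi - 1 - ... - m attached at xi (index d-1);
   the t-th new node has index d+t-1. *)
Definition extmx (d m : nat) (C : nat -> nat -> int) : nat -> nat -> int :=
  fun u v =>
    if (u < d)%N && (v < d)%N then C u v
    else if u == v then 2
    else if ((v == u.+1) && (d <= v)%N) || ((u == v.+1) && (d <= u)%N) then -1
    else 0.

(* Weights of g(Y) (Y with n nodes, Cartan matrix A) are integer vectors of
   coordinates in the fundamental weights; alpha_p = sum_q A q p omega_q
   (Kac convention a_{qp} = <alpha_p, h_q>). *)
Definition inQ (n : nat) (A : nat -> nat -> int) (w : nat -> int) : Prop :=
  exists c : nat -> int, forall q, (q < n)%N -> w q = \sum_(p < n) A q p * c p.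

(* (a_i)_{i>=1} is the sequence attached to (X, epsilon):
   -Delta_X omega_p - a_{j(p)} omegabar^(m) in Q(X(m)) whenever det X(m) != 0 *)
Definition is_ext_seq (d : nat) (C : nat -> nat -> int) (a : nat -> int) : Prop :=
  forall m : nat, detX (d + m) (extmx d m C) != 0 ->
    forall j, (j < d + m)%N ->
      inQ (d + m) (extmx d m C)
        (fun q => - DeltaX d C * (q == j)%:R - a j.+1 * (q == (d + m).-1)%:R).

(* Cartan matrix of Z_k, nodes indexed by i(p)-1 (0-based), N = d1+k+d2.
   X1 occupies 0..d1-1 (in epsilon1 order), A_k occupies d1..d1+k-1,
   X2 occupies d1+k..N-1 with node of epsilon2-number e at index N-e.
   Simple edges join consecutive indices u, u+1 for d1-1 <= u <= d1+k-1
   (for k = 0 this is the single edge xi1 - xi2). *)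
Definition Zmx (d1 d2 k : nat) (C1 C2 : nat -> nat -> int) : nat -> nat -> int :=
  fun u v =>
    let N := (d1 + k + d2)%N in
    if (u < d1)%N && (v < d1)%N then C1 u v
    else if (d1 + k <= u)%N && (d1 + k <= v)%N then C2 (N - u).-1 (N - v).-1
    else if u == v then 2
    else if ((v == u.+1) && (d1 <= v <= d1 + k)%N)
         || ((u == v.+1) && (d1 <= u <= d1 + k)%N) then -1
    else 0.

(* H_1: finitely supported integer sequences, represented by a list;
   x_i = nth 0 x (i-1) for i >= 1 *)
Definition xco (x : seq int) (i : nat) : int :=
  if i is i'.+1 then nth 0 x i' else 0.
(* l(x) = max { i : x_i <> 0 } (0 for the zero sequence) *)
Definition ellx (x : seq int) : nat :=
  \max_(i < size x | nth 0 x i != 0) i.+1.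

Definition lsg (d1 : nat) (x : seq int) : nat := maxn (ellx x) d1.
Definition rsg (d2 : nat) (y : seq int) : nat := maxn (ellx y) d2.

(* gamma^(k): coefficient of omega at 0-based index u is x_{i} + y_{ibar}
   with i = u+1, ibar = N+1-i = N-u *)
Definition gammak (d1 d2 k : nat) (x y : seq int) : nat -> int :=
  fun u => xco x u.+1 + xco y (d1 + k + d2 - u)%N.

Definition boxes (Delta1 Delta2 : int) (a1 a2 : nat -> int) (x y : seq int) : int :=
  Delta2 * \sum_(i < size x) nth 0 x i * a1 i.+1
  - Delta1 * \sum_(i < size y) nth 0 y i * a2 i.+1.

(* Main.v *)
Require Import Defs.
From mathcomp Require Import all_boot all_order all_algebra zify ring.
Import Order.TTheory GRing.Theory Num.Theory.
Local Open Scope ring_scope.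

Lemma sum_trunc n e (F : nat -> int) : (e <= n)%N ->
  (forall i, (e <= i)%N -> (i < n)%N -> F i = 0) ->
  \sum_(i < n) F i = \sum_(i < e) F i.
Proof.
move=> le Hz; rewrite (big_ord_widen n F le) [RHS]big_mkcond /=.
apply: eq_bigr => i _; case: ifP => // /negbT; rewrite -leqNgt => h.
by rewrite Hz.
Qed.

Lemma sum_delta n c (v : int) : (c < n)%N ->
  \sum_(i < n) (if (i : nat) == c then v else 0) = v.
Proof.
move=> lt; rewrite -big_mkcond /= (big_pred1 (Ordinal lt)) // => i /=.
Qed.

Lemma sum3 n (F : nat -> int) q : (0 < q)%N -> (q.+1 < n)%N ->
  (forall p, (p < n)%N -> p != q.-1 -> p != q -> p != q.+1 -> F p = 0) ->
  \sum_(p < n) F p = F q.-1 + F q + F q.+1.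
Proof.
move=> q0 qn Hz.
rewrite (eq_bigr (fun p : 'I_n => (if (p:nat) == q.-1 then F q.-1 else 0) +
   (if (p:nat) == q then F q else 0) + (if (p:nat) == q.+1 then F q.+1 else 0))).
  rewrite !big_split /= !sum_delta //; lia.
move=> p _.
case: (eqVneq (p:nat) q.-1) => [->|h1].
  have -> : (q.-1 == q) = false by apply/negbTE; lia.
  have -> : (q.-1 == q.+1) = false by apply/negbTE; lia.
  by rewrite !addr0.
case: (eqVneq (p:nat) q) => [->|h2].
  have -> : (q == q.+1) = false by apply/negbTE; lia.
  by rewrite add0r addr0.
case: (eqVneq (p:nat) q.+1) => [->|h3]; first by rewrite !add0r.
by rewrite Hz // !addr0.
Qed.

Lemma sum2 n (F : nat -> int) q : (0 < q)%N -> (q < n)%N ->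
  (forall p, (p < n)%N -> p != q.-1 -> p != q -> F p = 0) ->
  \sum_(p < n) F p = F q.-1 + F q.
Proof.
move=> q0 qn Hz.
rewrite (eq_bigr (fun p : 'I_n => (if (p:nat) == q.-1 then F q.-1 else 0) +
   (if (p:nat) == q then F q else 0))).
  rewrite !big_split /= !sum_delta //; lia.
move=> p _.
case: (eqVneq (p:nat) q.-1) => [->|h1].
  have -> : (q.-1 == q) = false by apply/negbTE; lia.
  by rewrite !addr0.
case: (eqVneq (p:nat) q) => [->|h2]; first by rewrite add0r.
by rewrite Hz // !addr0.
Qed.

Lemma adj_solve n (E : nat -> nat -> int) (f w : nat -> int) :
  (forall q, (q < n)%N -> w q = \sum_(p < n) E q p * f p) ->
  forall i : 'I_n, \det (sqmx n E) * f i = \sum_(j < n) \adj (sqmx n E) i j * w j.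
Proof.
move=> H i.
have e : (sqmx n E) *m (\col_(p < n) f p) = \col_(q < n) w q.
  apply/matrixP => q k; rewrite !mxE H //; apply: eq_bigr => p _; rewrite !mxE.
  by [].
have := congr1 (fun M => (\adj (sqmx n E) *m M) i ord0) e.
rewrite mulmxA mul_adj_mx mul_scalar_mx !mxE => ->.
by apply: eq_bigr => j _; rewrite !mxE.
Qed.

Lemma lead_minor n (E : nat -> nat -> int) :
  row' ord_max (col' ord_max (sqmx n.+1 E)) = sqmx n E.
Proof. by apply/matrixP => i j; rewrite !mxE !lift_max. Qed.

Lemma sign_even n : (-1) ^+ (n + n) = 1 :> int.
Proof. by rewrite -signr_odd addnn odd_double expr0. Qed.

Lemma adj_last n (E : nat -> nat -> int) :
  \adj (sqmx n.+1 E) ord_max ord_max = \det (sqmx n E).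
Proof. by rewrite mxE /cofactor sign_even mul1r lead_minor. Qed.

Lemma bump_lt h i : (i < h)%N -> bump h i = i.
Proof. by move=> H; rewrite /bump leqNgt H. Qed.
Lemma bump_ge h i : (h <= i)%N -> bump h i = i.+1.
Proof. by rewrite /bump => ->. Qed.

Lemma det_rec n (E : nat -> nat -> int) :
  E n.+1 n.+1 = 2 -> E n.+1 n = -1 -> E n n.+1 = -1 ->
  (forall j, (j < n)%N -> E n.+1 j = 0) -> (forall i, (i < n)%N -> E i n.+1 = 0) ->
  \det (sqmx n.+2 E) = 2 * \det (sqmx n.+1 E) - \det (sqmx n E).
Proof.
move=> h1 h2 h3 hr hc.
rewrite (expand_det_row _ ord_max) !big_ord_recr /= big1; last first.
  by move=> j _; rewrite mxE /= hr ?mul0r.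
rewrite add0r {2}/cofactor lead_minor sign_even mul1r /cofactor.
set B := row' _ _.
rewrite (expand_det_col B ord_max) big_ord_recr /= big1; last first.
  move=> i _; rewrite !mxE /= bump_lt ?bump_ge ?hc ?mul0r //.
  by apply: (ltn_trans (ltn_ord i)).
rewrite /cofactor sign_even mul1r.
have -> : row' ord_max (col' ord_max B) = sqmx n E.
  apply/matrixP => i k; rewrite !mxE /= !bump_lt //.
  by apply: (ltn_trans (ltn_ord i)).
rewrite add0r !mxE /= bump_lt ?bump_ge // h1 h2 h3.
rewrite addSn exprS sign_even.
rewrite !mulN1r ?mulr1 ?opprK addrC.
by []. Qed.


Ltac ifs := repeat (case: ifP => ?).

Lemma ext_det d C : (0 < d)%N -> forall m,
  detX (d + m) (extmx d m C) = detX d C + m%:Z * DeltaX d C.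
Proof.
case: d => [//|d'] _ m.
set E := extmx d'.+1 0 C.
have rec : forall j, \det (sqmx (d' + j).+2 E) =
   2 * \det (sqmx (d' + j).+1 E) - \det (sqmx (d' + j) E).
  move=> j; apply: det_rec; rewrite /E /extmx; try move=> i hi; ifs; lia.
have F0 : \det (sqmx d' E) = detXm1 d'.+1 C.
  rewrite /detXm1 /=; congr (\det _); apply/matrixP => i j; rewrite !mxE /E /extmx.
  have := ltn_ord i; have := ltn_ord j; ifs; lia.
have F1 : \det (sqmx d'.+1 E) = detX d'.+1 C.
  rewrite /detX /=; congr (\det _); apply/matrixP => i j; rewrite !mxE /E /extmx.
  have := ltn_ord i; have := ltn_ord j; ifs; lia.
have cl : forall j, \det (sqmx (d' + j).+1 E) = detX d'.+1 C + j%:Z * DeltaX d'.+1 C /\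
   \det (sqmx (d' + j).+2 E) = detX d'.+1 C + (j.+1)%:Z * DeltaX d'.+1 C.
  elim=> [|j [IH1 IH2]].
    rewrite addn0 F1 -(addn0 d') rec addn0 F1 F0 /DeltaX; lia.
  rewrite addnS IH2; split=> //.
  have := rec j.+1; rewrite !addnS => ->; rewrite IH2 IH1; lia.
change (\det (sqmx (d' + m).+1 E) = detX d'.+1 C + m%:Z * DeltaX d'.+1 C); exact: (proj1 (cl m)).
Qed.

Lemma Erow d C q p : (d <= q)%N -> extmx d 0 C q p =
  if p == q then 2 else if (p == q.+1) || (p.+1 == q) then -1 else 0.
Proof. move=> h; rewrite /extmx; ifs; lia. Qed.

Lemma Ecol d C q p : (d <= p)%N -> extmx d 0 C q p =
  if p == q then 2 else if (p == q.+1) || (p.+1 == q) then -1 else 0.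
Proof. move=> h; rewrite /extmx; ifs; lia. Qed.

Lemma ellx_size x : (ellx x <= size x)%N.
Proof. by apply/bigmax_leqP => i _; exact: ltn_ord. Qed.

Lemma xco_out x i : (ellx x <= i)%N -> xco x i.+1 = 0.
Proof.
move=> h /=; case: (ltnP i (size x)) => hs; last by rewrite nth_default.
apply/eqP; apply: contraLR h => nz; rewrite -ltnNge.
exact: (@leq_bigmax_cond _ (fun j : 'I_(size x) => nth 0 x j != 0) (fun j => j.+1) (Ordinal hs)).
Qed.

Lemma test (x y : int) (M : nat) : y != 0 -> (`|x|%N < M)%N -> x + M%:Z * y != 0.
Proof. move=> h1 h2. nia. Qed.

Lemma comb d C a x M :
  is_ext_seq d C a -> detX (d + M) (extmx d M C) != 0 ->
  forall k, (k <= d + M)%N -> exists g : nat -> int, forall q, (q < d + M)%N ->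
   \sum_(j < k) xco x j.+1 * (- DeltaX d C * (q == j)%:R - a j.+1 * (q == (d + M).-1)%:R)
    = \sum_(p < d + M) extmx d 0 C q p * g p.
Proof.
move=> He hdet; elim=> [|k IH] hk.
  by exists (fun _ => 0) => q _; rewrite big_ord0 big1 // => p _; rewrite mulr0.
have [g Hg] := IH (ltnW hk).
have [c Hc] := He M hdet k hk.
exists (fun p => g p + xco x k.+1 * c p) => q hq.
rewrite big_ord_recr /= Hg // Hc // mulr_sumr -big_split /=.
by apply: eq_bigr => p _; rewrite mulrDr mulrCA.
Qed.

Lemma exist_sol d C a x t M :
  (0 < d)%N -> extensible d C -> is_ext_seq d C a ->
  \sum_(i < size x) nth 0 x i * a i.+1 = DeltaX d C * t ->
  (maxn (ellx x) d < d + M)%N -> detX d C + M%:Z * DeltaX d C != 0 ->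
  exists b : nat -> int, forall q, (q < d + M)%N ->
    xco x q.+1 + t * (q == (d + M).-1)%:R = \sum_(p < d + M) extmx d 0 C q p * b p.
Proof.
move=> d0 [hD [hDl hg]] He hS hl hdM.
set n := (d + M)%N.
have hdet : detX n (extmx d M C) != 0 by rewrite ext_det.
have [g Hg] := @comb d C a x M He hdet n (leqnn n).
have Hg2 : forall q, (q < n)%N -> - DeltaX d C * (xco x q.+1 + t * (q == n.-1)%:R)
     = \sum_(p < n) extmx d 0 C q p * g p.
  move=> q hq; rewrite -Hg //.
  rewrite (eq_bigr (fun j : 'I_n => (if (j:nat) == q then - DeltaX d C * xco x q.+1 else 0)
     - (q == n.-1)%:R * (xco x j.+1 * a j.+1))); last first.
    move=> j _; rewrite (eq_sym q); case: (eqVneq (j:nat) q) => [->|hne] /=; ring.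
  rewrite big_split /= sum_delta // sumrN -mulr_sumr.
  rewrite (@sum_trunc n (ellx x) (fun j => xco x j.+1 * a j.+1)); last 2 first.
  - by apply: leq_trans (ltnW hl); apply: leq_maxl.
  - by move=> i hi _; rewrite xco_out // mul0r.
  rewrite (@sum_trunc (size x) (ellx x) (fun j => nth 0 x j * a j.+1) (ellx_size x)) in hS; last first.
    by move=> i hi _; have := @xco_out x i hi => /= ->; rewrite mul0r.
  rewrite /= hS; ring.
have hdiv : forall i, (i < n)%N -> (DeltaX d C %| g i)%Z.
  move=> i hi.
  have := @adj_solve n (extmx d 0 C) g
    (fun q => - DeltaX d C * (xco x q.+1 + t * (q == n.-1)%:R)) (fun q hq => Hg2 q hq) (Ordinal hi).
  rewrite /=.
  under eq_bigr => j _ do rewrite mulrCA.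
  rewrite -mulr_sumr.
  have -> : \det (sqmx n (extmx d 0 C)) = detX d C + M%:Z * DeltaX d C by rewrite -ext_det.
  move=> h.
  have cop : coprimez (DeltaX d C) (detX d C) by rewrite /coprimez gcdzC hg.
  rewrite -(Gauss_dvdzr _ cop); apply/dvdzP.
  set S := \sum_(j < n) _ in h.
  exists (- S - M%:Z * g i); move: h; rewrite /=; lia.
exists (fun p => - (g p %/ DeltaX d C)%Z) => q hq.
apply: (mulfI (x := - DeltaX d C)); first by rewrite oppr_eq0.
rewrite Hg2 // mulr_sumr; apply: eq_bigr => p _.
rewrite -{1}(divzK (hdiv _ (ltn_ord p))); ring.
Qed.


Definition solv d C x (t : int) n (b : nat -> int) := forall q, (q < n)%N ->
  xco x q.+1 + t * (q == n.-1)%:R = \sum_(p < n) extmx d 0 C q p * b p.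

Lemma step_rel d C x t n b b' : (0 < d)%N -> (maxn (ellx x) d < n)%N ->
  solv d C x t n b -> solv d C x t n.+1 b' ->
  \det (sqmx n.+1 (extmx d 0 C)) * (t - b' n) = \det (sqmx n (extmx d 0 C)) * (t - b n.-1).
Proof.
move=> d0 hl Hb Hb'.
set E := extmx d 0 C.
have dn : (d <= n)%N by apply: leq_trans (ltnW hl); apply: leq_maxr.
have ex : (ellx x <= n)%N by apply: leq_trans (ltnW hl); apply: leq_maxl.
set w := fun p => (if (p < n)%N then b p else t) - b' p.
have Hw : forall q, (q < n.+1)%N ->
    (t - b n.-1) * (q == n)%:R = \sum_(p < n.+1) E q p * w p.
  move=> q hq.
  under eq_bigr => p _ do rewrite /w mulrBr.
  rewrite sumrB -Hb' //= big_ord_recr /= ltnn.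
  under eq_bigr => p _ do rewrite ltn_ord.
  have [hlt|heq] : (q < n)%N \/ q = n by lia.
    have hEn : E q n = if q == n.-1 then -1 else 0.
      by rewrite /E Ecol //; ifs; lia.
    rewrite hEn -Hb // (_ : (q == n) = false); last by apply/negbTE; lia.
    case: (eqVneq q n.-1) => _ /=; ring.
  subst q; rewrite eqxx; have := @xco_out x n ex; rewrite /= => ->.
  rewrite (eq_bigr (fun p : 'I_n => if (p : nat) == n.-1 then - b n.-1 else 0)); last first.
    move=> p _; rewrite /E Erow //; have := ltn_ord p.
    case: (eqVneq (p : nat) n.-1) => [->|hne] hp.
      rewrite (_ : (n.-1 == n) = false); last by apply/negbTE; lia.
      rewrite (_ : (n.-1.+1 == n) = true); last by apply/eqP; lia.
      by rewrite orbT mulN1r.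
    by ifs; lia.
  rewrite sum_delta; last by lia.
  have -> : E n n = 2 by rewrite /E Erow // eqxx.
  ring.
have := @adj_solve n.+1 E w (fun q => (t - b n.-1) * (q == n)%:R) (fun q hq => Hw q hq) ord_max.
rewrite /= /w ltnn => ->.
rewrite (eq_bigr (fun j : 'I_n.+1 => if (j : nat) == n then \adj (sqmx n.+1 E) ord_max ord_max * (t - b n.-1) else 0)); last first.
  move=> j _; case: (eqVneq (j : nat) n) => [hj|hj] /=.
    have -> : j = ord_max by apply/val_inj.
    by rewrite /= ?eqxx ?mulr1.
  by rewrite mulr0 mulr0.
by rewrite sum_delta // adj_last.
Qed.


Lemma row_mid d C n q (b : nat -> int) : (d <= q)%N -> (0 < q)%N -> (q.+1 < n)%N ->
  \sum_(p < n) extmx d 0 C q p * b p = - b q.-1 + 2 * b q - b q.+1.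
Proof.
move=> dq q0 qn.
rewrite (@sum3 n (fun p => extmx d 0 C q p * b p) q) //; last first.
  by move=> p hp h1 h2 h3; rewrite Erow //; ifs; try lia; rewrite mul0r.
rewrite !Erow // eqxx.
have -> : (q.-1 == q) = false by apply/negbTE; lia.
have -> : (q.-1.+1 == q) by apply/eqP; lia.
have -> : (q.+1 == q) = false by apply/negbTE; lia.
rewrite eqxx /= orbT; ring.
Qed.

Lemma row_last d C n (b : nat -> int) : (d <= n.-1)%N -> (0 < n.-1)%N ->
  \sum_(p < n) extmx d 0 C n.-1 p * b p = - b n.-2 + 2 * b n.-1.
Proof.
move=> dq q0.
rewrite (@sum2 n (fun p => extmx d 0 C n.-1 p * b p) n.-1) //; last 2 first.
- by lia.
- by move=> p hp h1 h2; rewrite Erow //; ifs; try lia; rewrite mul0r.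
rewrite !Erow // eqxx.
have -> : (n.-2 == n.-1) = false by apply/negbTE; lia.
have -> : (n.-2.+1 == n.-1) by apply/eqP; lia.
rewrite orbT; ring.
Qed.

Lemma tail_const d C x t n b : (0 < d)%N -> (maxn (ellx x) d < n)%N ->
  solv d C x t n b -> b n.-1 = t ->
  forall p, ((maxn (ellx x) d).-1 <= p)%N -> (p < n)%N -> b p = t.
Proof.
move=> d0 hl Hb hlast.
set l := maxn (ellx x) d in hl *.
have dl : (d <= l)%N by apply: leq_maxr.
have el : (ellx x <= l)%N by apply: leq_maxl.
have h2 : b n.-2 = t.
  have := Hb n.-1 ltac:(lia); rewrite eqxx xco_out; last by lia.
  rewrite row_last; [ | lia | lia]; rewrite hlast; lia.
have P : forall k, (k <= n.-1 - l)%N -> b (n.-1 - k)%N = t /\ b (n.-1 - k)%N.-1 = t.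
  elim=> [|k IH] hk.
    by rewrite subn0; split.
  have [IH1 IH2] := IH (ltnW hk).
  set q := (n.-1 - k.+1)%N.
  have hq : q = (n.-1 - k)%N.-1 by rewrite /q; lia.
  split; first by rewrite hq.
  have := Hb q ltac:(lia); rewrite xco_out; last by lia.
  rewrite (_ : (q == n.-1) = false); last by apply/negbTE; lia.
  rewrite row_mid; [ | lia | lia | lia].
  have -> : q.+1 = (n.-1 - k)%N by lia.
  rewrite hq in IH2 *.
  rewrite IH1 IH2; lia.
move=> p hp hpn.
have [hpl|hpl] : (l <= p)%N \/ p = l.-1 by lia.
  have := P (n.-1 - p)%N ltac:(lia); rewrite (_ : (n.-1 - (n.-1 - p))%N = p) //; last by lia.
  by case.
have := P (n.-1 - l)%N (leqnn _); rewrite (_ : (n.-1 - (n.-1 - l))%N = l); last by lia.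
by rewrite hpl; case.
Qed.
Lemma zero_lem (D De dl K : int) (M : nat) : De != 0 -> (`|D|%N + `|K|%N < M)%N ->
  (D + M%:Z * De) * dl = K -> dl = 0.
Proof. move=> h1 h2 h3.
have h6 : `|D| + `|K| < M%:Z by lia.
have [h4|h4] : 1 <= De \/ De <= -1 by lia;
have [h5|[h5|h5]] : 1 <= dl \/ dl <= -1 \/ dl = 0 by lia.
all: try done.
all: have hM : (M%:Z <= M%:Z * De \/ M%:Z <= - (M%:Z * De)) by nia.
all: nia.
Qed.

Lemma side d C a x t : (0 < d)%N -> extensible d C -> is_ext_seq d C a ->
  \sum_(i < size x) nth 0 x i * a i.+1 = DeltaX d C * t ->
  exists f : nat -> int, (forall p, ((maxn (ellx x) d).-1 <= p)%N -> f p = t) /\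
   forall i, (i < maxn (ellx x) d)%N ->
     xco x i.+1 = \sum_(p < (maxn (ellx x) d).+1) extmx d 0 C i p * f p.
Proof.
move=> d0 hext He hS.
have hext' := hext; case: hext' => [hD [hDl hg]].
set l := maxn (ellx x) d.
have dl : (d <= l)%N by apply: leq_maxr.
have el : (ellx x <= l)%N by apply: leq_maxl.
set M0 := (l + `|detX d C|%N).+1.
have nz : forall M, (M0 <= M)%N -> detX d C + M%:Z * DeltaX d C != 0.
  move=> M hM; apply/eqP => h0.
  have := @zero_lem (detX d C) (DeltaX d C) 1 0 M hDl ltac:(lia); rewrite h0 mul0r.
  by move=> /(_ erefl).
have ex : forall M, (M0 <= M)%N -> exists b, solv d C x t (d + M) b.
  move=> M hM; exact: (@exist_sol d C a x t M d0 hext He hS ltac:(lia) (nz M hM)).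
have [b0 Hb0] := ex M0 (leqnn _).
set K := \det (sqmx (d + M0) (extmx d 0 C)) * (t - b0 (d + M0).-1).
have ind : forall j, exists b, solv d C x t (d + (M0 + j)) b /\
    \det (sqmx (d + (M0 + j)) (extmx d 0 C)) * (t - b (d + (M0 + j)).-1) = K.
  elim=> [|j [b [Hb HK]]].
    by exists b0; rewrite addn0.
  have [b' Hb'] := ex (M0 + j.+1)%N ltac:(lia).
  exists b'; split=> //.
  rewrite -HK -(@step_rel d C x t (d + (M0 + j)) b b') //; last first.
  - by rewrite -addnS -addnS.
  - by lia.
  by rewrite addnS addnS.
have [b [Hb HK]] := ind `|K|%N.
set n := (d + (M0 + `|K|))%N in Hb HK.
have hdet : \det (sqmx n (extmx d 0 C)) = detX d C + (M0 + `|K|)%N%:Z * DeltaX d C.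
  by rewrite -ext_det.
rewrite hdet in HK.
have d0' := @zero_lem _ _ _ _ _ hDl _ HK.
have hlast : b n.-1 = t by have := d0' ltac:(lia); lia.
have hln : (l < n)%N by lia.
have Tc := @tail_const d C x t n b d0 hln Hb hlast.
exists (fun p => if (p < n)%N then b p else t); split.
  by move=> p hp; case: ifP => // hpn; apply: Tc.
move=> i hi.
have := Hb i ltac:(lia); rewrite (_ : (i == n.-1) = false); last by apply/negbTE; lia.
rewrite mulr0 addr0 => ->.
rewrite (@sum_trunc n l.+1 (fun p => extmx d 0 C i p * b p)); last 2 first.
- by lia.
- by move=> p hp hpn; rewrite Ecol; [ifs; try lia; rewrite mul0r | lia].
apply: eq_bigr => p _; have := ltn_ord p => hp.
by rewrite (_ : (p < n)%N = true) //; apply/idP; lia.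
Qed.

Lemma Zmid d1 d2 k C1 C2 q p : (d1 <= q)%N -> (q < d1 + k)%N ->
  Zmx d1 d2 k C1 C2 q p = if p == q then 2 else if (p == q.+1) || (p.+1 == q) then -1 else 0.
Proof. move=> h1 h2; rewrite /Zmx; ifs; lia. Qed.
Lemma Zzero d1 d2 k C1 C2 q p : (q.+1 < p)%N -> (d1 < p)%N -> (q < d1 + k)%N ->
  Zmx d1 d2 k C1 C2 q p = 0.
Proof. move=> h1 h2 h3; rewrite /Zmx; ifs; lia. Qed.
Lemma Zzero2 d1 d2 k C1 C2 q p : (p.+1 < q)%N -> (d1 <= q)%N -> (p < d1 + k)%N ->
  Zmx d1 d2 k C1 C2 q p = 0.
Proof. move=> h1 h2 h3; rewrite /Zmx; ifs; lia. Qed.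
Lemma ZZm1 d1 d2 k C1 C2 q : (d1 <= q)%N -> (q < d1 + k)%N -> (0 < q)%N ->
  Zmx d1 d2 k C1 C2 q q.-1 = -1.
Proof. move=> h1 h2 h3; rewrite /Zmx; ifs; lia. Qed.
Lemma ZZm0 d1 d2 k C1 C2 q : (d1 <= q)%N -> (q < d1 + k)%N ->
  Zmx d1 d2 k C1 C2 q q = 2.
Proof. move=> h1 h2; rewrite /Zmx; ifs; lia. Qed.
Lemma ZZp1 d1 d2 k C1 C2 q : (d1 <= q)%N -> (q < d1 + k)%N ->
  Zmx d1 d2 k C1 C2 q q.+1 = -1.
Proof. move=> h1 h2; rewrite /Zmx; ifs; lia. Qed.

Lemma ZL d1 d2 k C1 C2 q p : (q < d1 + k)%N -> (p <= d1 + k)%N ->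
  Zmx d1 d2 k C1 C2 q p = extmx d1 0 C1 q p.
Proof. move=> h1 h2; rewrite /Zmx /extmx; ifs; lia. Qed.

Lemma ZR d1 d2 k C1 C2 q p : (d1 <= q)%N -> (q < d1 + k + d2)%N -> (p < d1 + k + d2)%N ->
  Zmx d1 d2 k C1 C2 q p = extmx d2 0 C2 (d1 + k + d2 - q).-1 (d1 + k + d2 - p).-1.
Proof. move=> h1 h2 h3; rewrite /Zmx /extmx; ifs; lia. Qed.

Theorem proposition4p8
  (d1 d2 : nat) (C1 C2 : nat -> nat -> int) (a1 a2 : nat -> int)
  (x y : seq int) :
  (0 < d1)%N -> (0 < d2)%N ->
  is_GCM d1 C1 -> symmetrizable d1 C1 ->
  is_GCM d2 C2 -> symmetrizable d2 C2 ->
  extensible d1 C1 -> extensible d2 C2 ->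
  gcdz (DeltaX d1 C1) (DeltaX d2 C2) = 1 ->
  is_ext_seq d1 C1 a1 -> is_ext_seq d2 C2 a2 ->
  boxes (DeltaX d1 C1) (DeltaX d2 C2) a1 a2 x y = 0 ->
  let l := lsg d1 x in
  let r := rsg d2 y in
  exists (b c : nat -> int) (s : int),
    forall k : nat, (l + r - d1 - d2 <= k)%N ->
      let N := (d1 + k + d2)%N in
      forall q, (q < N)%N ->
        gammak d1 d2 k x y q =
        \sum_(p < N)
          Zmx d1 d2 k C1 C2 q p *
          (if (p.+1 <= l.-1)%N then b p.+1
           else if (N - p <= r.-1)%N then c (N - p)%N
           else s).
Proof.
move=> h1 h2 _ _ _ _ ext1 ext2 g12 He1 He2 hbox l r.
have e1 := ext1; case: e1 => [_ [hD1 _]].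
have e2 := ext2; case: e2 => [_ [hD2 _]].
move: hbox; rewrite /boxes.
set S1 := \sum_(i < size x) _.
set S2 := \sum_(i < size y) _.
move=> hbox.
have cop : coprimez (DeltaX d1 C1) (DeltaX d2 C2) by rewrite /coprimez g12.
have dv : (DeltaX d1 C1 %| S1)%Z.
  rewrite -(Gauss_dvdzr _ cop); apply/dvdzP; exists S2.
  by move: hbox; lia.
set t := (S1 %/ DeltaX d1 C1)%Z.
have hS1 : S1 = DeltaX d1 C1 * t by rewrite mulrC divzK.
have hS2 : S2 = DeltaX d2 C2 * t.
  apply: (mulfI hD1); move: hbox; rewrite hS1; lia.
have [f1 [F1t F1r]] := @side d1 C1 a1 x t h1 ext1 He1 hS1.
have [f2 [F2t F2r]] := @side d2 C2 a2 y t h2 ext2 He2 hS2.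
exists (fun i => f1 i.-1), (fun i => f2 i.-1), t.
move=> k hk q hq /=.
have hl : l = maxn (ellx x) d1 by [].
have hr : r = maxn (ellx y) d2 by [].
rewrite -hl in F1t F1r; rewrite -hr in F2t F2r.
clearbody l r.
have hN : (l + r <= d1 + k + d2)%N by lia.
set N := (d1 + k + d2)%N in hN hq *.
set coef := fun p : nat => if (p < l.-1)%N then f1 p else if (N - p <= r.-1)%N then f2 (N - p).-1 else t.
transitivity (\sum_(p < N) Zmx d1 d2 k C1 C2 q p * coef p); last by [].
have cL : forall p, (p <= N - r)%N -> coef p = f1 p.
  move=> p hp; rewrite /coef; case: ifP => // hp1; case: ifP => hp2; first lia.
  by rewrite F1t //; lia.
have cR : forall p, (l.-1 <= p)%N -> (p < N)%N -> coef p = f2 (N - p).-1.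
  move=> p hp hpN; rewrite /coef; case: ifP => hp1; first lia.
  by case: ifP => // hp2; rewrite F2t //; lia.
rewrite /gammak -/N.
have [qa|[qc|qb]] : (q < l)%N \/ (l <= q < N - r)%N \/ (N - r <= q)%N by lia.
- rewrite (_ : (N - q)%N = (N - q).-1.+1); last by lia.
  rewrite [xco y _]xco_out; last by lia.
  rewrite addr0 F1r //.
  rewrite (@sum_trunc N l.+1 (fun p => Zmx d1 d2 k C1 C2 q p * coef p)); [| lia |]; last first.
    by move=> p hp hpn; rewrite Zzero ?mul0r //; lia.
  apply: eq_bigr => p _; have := ltn_ord p => hp.
  by rewrite ZL ?cL //; lia.
- rewrite xco_out; last by lia.
  rewrite (_ : (N - q)%N = (N - q).-1.+1); last by lia.
  rewrite xco_out; last by lia.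
  rewrite addr0 (@sum3 N (fun p => Zmx d1 d2 k C1 C2 q p * coef p) q); [| lia | lia |]; last first.
    move=> p hp hp1 hp2 hp3; rewrite Zmid; [| lia | lia].
    rewrite (negbTE hp2) (negbTE hp3) (_ : (p.+1 == q) = false) ?mul0r //.
    by apply/negbTE; lia.
  rewrite !cL; [| lia | lia | lia].
  rewrite !F1t; [| lia | lia | lia].
  rewrite ZZm1; [| lia | lia | lia].
  rewrite ZZm0; [| lia | lia].
  rewrite ZZp1; [| lia | lia].
  ring.
- rewrite xco_out; last by lia.
  rewrite add0r (_ : (N - q)%N = (N - q).-1.+1); last by lia.
  rewrite F2r; last by lia.
  rewrite [RHS](reindex_inj rev_ord_inj) /=.
  rewrite (@sum_trunc N r.+1 (fun p => Zmx d1 d2 k C1 C2 q (N - p.+1)%N * coef (N - p.+1)%N)); [| lia |]; last first.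
    by move=> p hp hpn; rewrite Zzero2 ?mul0r //; lia.
  apply: eq_bigr => p _; have := ltn_ord p => hp.
  rewrite ZR; [| lia | lia | lia].
  rewrite cR; [| lia | lia].
  rewrite -/N (_ : (N - (N - p.+1)%N)%N.-1 = p); last by lia.
  by [].
Qed.
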